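(* Let $\mathcal A,\mathcal B>0$, $\alpha,\beta\in(0,1)$, $h,\tau>0$, $N\ge1$, and assume $$\frac{\tau^{\alpha}(-\alpha^2+4\alpha-2)\mathcal A+\tau^{\beta}(-\beta^2+4\beta-2)\mathcal B}{h^2}\le\frac{279}{952}.$$ Fix a real $\theta$, let $s=\sin^2(\theta h/2)$, and let $\widetilde\xi_0\in\mathbb C$ and $\widetilde\xi_1,\dots,\widetilde\xi_N$ be defined by $$\widetilde{\mathcal Q}\,\widetilde\xi_{k+1}=\widetilde{\mathcal P}\,\widetilde\xi_k-4s\Big[1+\tfrac13 s+\tfrac8{45}s^2\Big]\sum_{\ell=2}^{k+1}g_\ell^{(\alpha,\beta)}\widetilde\xi_{k+1-\ell},\qquad k=0,\dots,N-1,$$ where $\widetilde{\mathcal Q}=[1-\frac{4}{35}s^3]+4g_0^{(\alpha,\beta)}s[1+\frac13 s+\frac8{45}s^2]$ and $\widetilde{\mathcal P}=[1-\frac{4}{35}s^3]-4g_1^{(\alpha,\beta)}s[1+\frac13 s+\frac8{45}s^2]$. Then $|\widetilde\xi_{k+1}|\le|\widetilde\xi_0|$ for $k=0,1,\dots,N-1$.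
   Context: $\varpi_\ell^{(\sigma)}=(-1)^\ell\binom{\sigma}{\ell}$, $g_0^{(\sigma)}=\frac{1+\sigma}{2}\varpi_0^{(\sigma)}$, $g_\ell^{(\sigma)}=\frac{1+\sigma}{2}\varpi_\ell^{(\sigma)}+\frac{1-\sigma}{2}\varpi_{\ell-1}^{(\sigma)}$ ($\ell\ge1$); $\mu_\alpha=\tau^\alpha\mathcal A/h^2$, $\mu_\beta=\tau^\beta\mathcal B/h^2$, $g_\ell^{(\alpha,\beta)}=\mu_\alpha g_\ell^{(1-\alpha)}+\mu_\beta g_\ell^{(1-\beta)}$. The sum is empty for $k=0$. *)

(* Defs.v *)
From Stdlib Require Import Reals Lra Lia.
From Coquelicot Require Import Coquelicot.
Open Scope R_scope.

Fixpoint binomR (sigma : R) (l : nat) : R :=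
  match l with
  | O => 1
  | S l' => binomR sigma l' * (sigma - INR l') / (INR l' + 1)
  end.

Definition varpi (sigma : R) (l : nat) : R := (-1) ^ l * binomR sigma l.

Definition gcoef (sigma : R) (l : nat) : R :=
  match l with
  | O => (1 + sigma) / 2 * varpi sigma 0
  | S l' => (1 + sigma) / 2 * varpi sigma (S l') + (1 - sigma) / 2 * varpi sigma l'
  end.

Definition gab (A B alpha beta tau h : R) (l : nat) : R :=
  Rpower tau alpha * A / h ^ 2 * gcoef (1 - alpha) l
  + Rpower tau beta * B / h ^ 2 * gcoef (1 - beta) l.

(* sum_{l=m}^{n} f l  in C (zero when n < m) *)
Fixpoint Csum_from (m : nat) (len : nat) (f : nat -> C) : C :=
  match len with
  | O => 0%C
  | S len' => Cplus (f m) (Csum_from (S m) len' f)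
  end.
Definition Csum (m n : nat) (f : nat -> C) : C := Csum_from m (S n - m) f.

(* Main.v *)
Require Import Defs.
From Stdlib Require Import Reals Lra Lia.
From Coquelicot Require Import Coquelicot.
Open Scope R_scope.

Fixpoint Rsum_from (m len : nat) (f : nat -> R) : R :=
  match len with
  | O => 0
  | S len' => f m + Rsum_from (S m) len' f
  end.

Lemma Rsum_snoc m len f : Rsum_from m (S len) f = Rsum_from m len f + f (m + len)%nat.
Proof.
  revert m; induction len as [|len IH]; intro m.
  - simpl. rewrite Nat.add_0_r. lra.
  - change (Rsum_from m (S (S len)) f) with (f m + Rsum_from (S m) (S len) f).
    rewrite IH. simpl. rewrite Nat.add_succ_r. lra.
Qed.

Lemma Rsum_lin m len f g a b :
  Rsum_from m len (fun l => a * f l + b * g l) = a * Rsum_from m len f + b * Rsum_from m len g.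
Proof.
  revert m; induction len as [|len IH]; intro m; simpl; [lra|]. rewrite IH. lra.
Qed.

Lemma Rsum_scale m len f a :
  Rsum_from m len (fun l => f l * a) = Rsum_from m len f * a.
Proof.
  revert m; induction len as [|len IH]; intro m; simpl; [lra|]. rewrite IH. lra.
Qed.

Lemma Csum_bound m len f r :
  (forall l, (m <= l < m + len)%nat -> Cmod (f l) <= r l) ->
  Cmod (Csum_from m len f) <= Rsum_from m len r.
Proof.
  revert m; induction len as [|len IH]; intros m H; simpl.
  - rewrite Cmod_0; lra.
  - eapply Rle_trans; [apply Cmod_triangle|].
    apply Rplus_le_compat. apply H; lia. apply IH. intros l Hl; apply H; lia.
Qed.

Lemma varpi_step sg n : varpi sg (S n) = varpi sg n * ((INR n - sg) / (INR n + 1)).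
Proof.
  unfold varpi. simpl binomR. simpl pow.
  assert (INR n + 1 <> 0) by (pose proof (pos_INR n); lra).
  field; auto.
Qed.

Lemma varpi0 sg : varpi sg 0 = 1.
Proof. unfold varpi; simpl; lra. Qed.

Lemma varpi_main sg (h : 0 < sg < 1) n :
  0 < Rsum_from 0 (S n) (varpi sg) /\
  varpi sg (S n) = - sg / (INR n + 1) * Rsum_from 0 (S n) (varpi sg).
Proof.
  induction n as [|n [IH1 IH2]].
  - simpl. rewrite varpi_step, varpi0. simpl. split; [lra|]. field.
  - pose proof (pos_INR n) as Hn.
    rewrite Rsum_snoc. simpl (0 + S n)%nat. rewrite IH2.
    set (T := Rsum_from 0 (S n) (varpi sg)) in *.
    split.
    + replace (T + - sg / (INR n + 1) * T) with (T * ((INR n + 1 - sg) / (INR n + 1))) by (field; lra).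
      apply Rmult_lt_0_compat; auto. apply Rdiv_lt_0_compat; lra.
    + rewrite varpi_step, IH2. rewrite S_INR. field. lra.
Qed.

Lemma varpi_nonpos sg (h : 0 < sg < 1) n : varpi sg (S n) <= 0.
Proof.
  destruct (varpi_main sg h n) as [H1 H2]. rewrite H2.
  pose proof (pos_INR n).
  assert (0 <= sg / (INR n + 1)) by (unfold Rdiv; apply Rmult_le_pos; [lra| left; apply Rinv_0_lt_compat; lra]).
  unfold Rdiv in *. nra.
Qed.

Lemma gcoef_sum sg (h : 0 < sg < 1) n :
  Rsum_from 0 (S (S n)) (gcoef sg) =
  (1 + sg) / 2 * Rsum_from 0 (S (S n)) (varpi sg) + (1 - sg) / 2 * Rsum_from 0 (S n) (varpi sg).
Proof.
  induction n as [|n IH].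
  - simpl. lra.
  - rewrite (Rsum_snoc 0 (S (S n)) (gcoef sg)), IH.
    rewrite (Rsum_snoc 0 (S (S n)) (varpi sg)).
    rewrite (Rsum_snoc 0 (S n) (varpi sg)).
    simpl (0 + _)%nat. change (gcoef sg (S (S n))) with
      ((1 + sg) / 2 * varpi sg (S (S n)) + (1 - sg) / 2 * varpi sg (S n)).
    lra.
Qed.

Lemma gcoef_sum_nonneg sg (h : 0 < sg < 1) n : 0 <= Rsum_from 0 (S (S n)) (gcoef sg).
Proof.
  rewrite gcoef_sum by auto.
  pose proof (proj1 (varpi_main sg h n)). pose proof (proj1 (varpi_main sg h (S n))).
  nra.
Qed.

Lemma gcoef_nonpos sg (h : 0 < sg < 1) n : gcoef sg (S (S n)) <= 0.
Proof.
  simpl gcoef. pose proof (varpi_nonpos sg h (S n)). pose proof (varpi_nonpos sg h n). nra.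
Qed.

Theorem lemma10 (A B alpha beta h tau : R) (N : nat)
  (hA : 0 < A) (hB : 0 < B)
  (halpha : 0 < alpha < 1) (hbeta : 0 < beta < 1)
  (hh : 0 < h) (htau : 0 < tau) (hN : (1 <= N)%nat)
  (hcond : (Rpower tau alpha * (- alpha ^ 2 + 4 * alpha - 2) * A
            + Rpower tau beta * (- beta ^ 2 + 4 * beta - 2) * B) / h ^ 2
           <= 279 / 952)
  (theta : R) (xi : nat -> C) :
  let s := (sin (theta * h / 2)) ^ 2 in
  let F := 1 + s / 3 + 8 / 45 * s ^ 2 in
  let Q := (1 - 4 / 35 * s ^ 3) + 4 * gab A B alpha beta tau h 0 * s * F in
  let P := (1 - 4 / 35 * s ^ 3) - 4 * gab A B alpha beta tau h 1 * s * F in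
  (forall k : nat, (k < N)%nat ->
     Cmult (RtoC Q) (xi (S k)) =
     Cminus (Cmult (RtoC P) (xi k))
       (Cmult (RtoC (4 * s * F))
          (Csum 2 (S k) (fun l => Cmult (RtoC (gab A B alpha beta tau h l)) (xi (S k - l)%nat))))) ->
  forall k : nat, (k < N)%nat -> Cmod (xi (S k)) <= Cmod (xi 0%nat).
Proof.
  intros s F Q P Hrec.
  set (g := gab A B alpha beta tau h).
  set (M := Cmod (xi 0%nat)).
  set (ma := Rpower tau alpha * A / h ^ 2).
  set (mb := Rpower tau beta * B / h ^ 2).
  assert (Hma : 0 < ma).
  { unfold ma. apply Rdiv_lt_0_compat. apply Rmult_lt_0_compat; auto. apply exp_pos.
    apply pow_lt; auto. }
  assert (Hmb : 0 < mb).
  { unfold mb. apply Rdiv_lt_0_compat. apply Rmult_lt_0_compat; auto. apply exp_pos.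
    apply pow_lt; auto. }
  assert (sa : 0 < 1 - alpha < 1) by lra.
  assert (sb : 0 < 1 - beta < 1) by lra.
  assert (Hg : forall l, g l = ma * gcoef (1 - alpha) l + mb * gcoef (1 - beta) l) by reflexivity.
  assert (Hg0 : 0 < g 0%nat).
  { rewrite Hg. simpl gcoef. rewrite !varpi0. nra. }
  assert (Hg1 : g 1%nat <= 279 / 1904).
  { rewrite Hg. simpl gcoef. rewrite !varpi_step, !varpi0. simpl INR.
    replace (ma * ((1 + (1 - alpha)) / 2 * (1 * ((0 - (1 - alpha)) / (0 + 1))) + (1 - (1 - alpha)) / 2 * 1) +
     mb * ((1 + (1 - beta)) / 2 * (1 * ((0 - (1 - beta)) / (0 + 1))) + (1 - (1 - beta)) / 2 * 1))
     with ((Rpower tau alpha * (- alpha ^ 2 + 4 * alpha - 2) * A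
            + Rpower tau beta * (- beta ^ 2 + 4 * beta - 2) * B) / h ^ 2 / 2).
    lra. unfold ma, mb. field. lra. }
  assert (Hgn : forall n, g (S (S n)) <= 0).
  { intro n. rewrite Hg. pose proof (gcoef_nonpos _ sa n). pose proof (gcoef_nonpos _ sb n). nra. }
  assert (Hgs : forall n, 0 <= g 0%nat + g 1%nat + Rsum_from 2 n g).
  { intro n. replace (g 0%nat + g 1%nat + Rsum_from 2 n g) with (Rsum_from 0 (S (S n)) g) by (simpl; lra).
    unfold g. unfold gab. rewrite Rsum_lin. fold ma mb.
    pose proof (gcoef_sum_nonneg _ sa n). pose proof (gcoef_sum_nonneg _ sb n). nra. }
  assert (Hs : 0 <= s <= 1).
  { unfold s. pose proof (SIN_bound (theta * h / 2)). simpl. nra. }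
  set (a := 1 - 4 / 35 * s ^ 3).
  set (b := 4 * s * F).
  assert (Ha : 0 < a) by (unfold a; simpl; nra).
  assert (Hb : 0 <= b) by (unfold b, F; simpl; nra).
  assert (Hkey : b * g 1%nat <= a).
  { destruct (Rle_dec (g 1%nat) 0) as [Hn|Hp].
    - nra.
    - assert (b * (279/1904) <= a).
      { unfold a, b, F. simpl.
        assert (Hf : 0 <= (1 - s) * (1 + 197/476 * s + 26/119 * s * s)).
        { apply Rmult_le_pos; nra. }
        nra. }
      nra. }
  assert (HQ : Q = a + b * g 0%nat) by (unfold Q, a, b, g; ring).
  assert (HP : P = a - b * g 1%nat) by (unfold P, a, b, g; ring).
  assert (HQp : 0 < Q) by (rewrite HQ; nra).
  assert (Main : forall n, (n <= N)%nat -> forall j, (j <= n)%nat -> Cmod (xi j) <= M).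
  { induction n as [|n IH]; intros Hn j Hj.
    - replace j with 0%nat by lia. unfold M; lra.
    - destruct (Nat.eq_dec j (S n)) as [->|Hne]; [|apply IH; lia].
      specialize (Hrec n ltac:(lia)).
      set (Sm := Csum 2 (S n) (fun l => Cmult (RtoC (g l)) (xi (S n - l)%nat))).
      assert (HSm : Cmod Sm <= - Rsum_from 2 n g * M).
      { unfold Sm, Csum. simpl (S (S n) - 2)%nat. rewrite Nat.sub_0_r.
        eapply Rle_trans.
        - apply (Csum_bound _ _ _ (fun l => - g l * M)).
          intros l Hl. rewrite Cmod_mult, Cmod_R.
          destruct l as [|[|l]]; try lia.
          pose proof (Hgn l). rewrite Rabs_left1 by auto.
          apply Rmult_le_compat_l; [lra|]. apply IH; lia.
        - replace (Rsum_from 2 n (fun l => - g l * M)) with (Rsum_from 2 n (fun l => g l * (- M))).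
          rewrite Rsum_scale. right; ring.
          clear. generalize 2%nat. induction n; intro m; simpl; auto. rewrite IHn. f_equal. ring. }
      assert (Hxn : Cmod (xi n) <= M) by (apply IH; lia).
      assert (HM : 0 <= M) by (apply Cmod_ge_0).
      assert (E : Q * Cmod (xi (S n)) <= Rabs P * M + b * (- Rsum_from 2 n g * M)).
      { replace (Q * Cmod (xi (S n))) with (Cmod (Cmult (RtoC Q) (xi (S n)))).
        2:{ rewrite Cmod_mult, Cmod_R, Rabs_right; lra. }
        rewrite Hrec. unfold Cminus. eapply Rle_trans; [apply Cmod_triangle|].
        rewrite Cmod_opp, !Cmod_mult, !Cmod_R. fold b. fold Sm.
        rewrite (Rabs_right b) by lra.
        apply Rplus_le_compat. apply Rmult_le_compat_l; [apply Rabs_pos|auto].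
        apply Rmult_le_compat_l; auto. }
      pose proof (Hgs n).
      assert (Hgn2 : Rsum_from 2 n g <= 0).
      { assert (G : forall m len, (2 <= m)%nat -> Rsum_from m len g <= 0).
        { intros m len; revert m; induction len as [|len IHl]; intros m Hm; simpl; [lra|].
          destruct m as [|[|m]]; try lia. pose proof (Hgn m). pose proof (IHl (S (S (S m))) ltac:(lia)). lra. }
        apply G; lia. }
      assert (Q * Cmod (xi (S n)) <= Q * M).
      { eapply Rle_trans; [exact E|].
        assert (X1 : 0 <= b * (g 0%nat + g 1%nat + Rsum_from 2 n g) * M).
        { apply Rmult_le_pos; auto. apply Rmult_le_pos; auto. }
        assert (X2 : 0 <= (a - b * g 1%nat) * M) by (apply Rmult_le_pos; lra).
        destruct (Rle_dec 0 P).
        - rewrite Rabs_right by lra. rewrite HQ, HP. lra.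
        - rewrite Rabs_left by lra. rewrite HQ, HP. lra. }
      nra. }
  intros k Hk. apply (Main (S k)); lia.
Qed.
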